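(* The maximum of $\operatorname{rk}_\perp(A)$ over all real tensors $A\in\mathbb{R}^3\otimes\mathbb{R}^3\otimes\mathbb{R}^3$ equals $7$.
   Context: An $(n_1,\dots,n_d)$-tensor is an $n_1\times\cdots\times n_d$ real array. The Frobenius inner product is $\langle A,A'\rangle_F=\sum a_{i_1\dots i_d}a'_{i_1\dots i_d}$. A rank-one tensor is a nonzero outer product $x^{(1)}\otimes\cdots\otimes x^{(d)}$, whose entries are $x^{(1)}_{i_1}\cdots x^{(d)}_{i_d}$. The orthogonal rank $\operatorname{rk}_\perp(A)$ of a tensor $A$ is the smallest $r$ such that $A=Y_1+\dots+Y_r$ with rank-one tensors $Y_\ell$ satisfying $\langle Y_\ell,Y_{\ell'}\rangle_F=0$ for all $\ell\neq\ell'$. The zero tensor has orthogonal rank $0$. *)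

(* Defs.v *)
From Stdlib Require Import Reals List Arith.
Open Scope R_scope.

(* An (n1,n2,n3)-tensor is represented by a function on index triples;
   only entries with i < n1, j < n2, k < n3 are meaningful. *)
Definition tensor3 := nat -> nat -> nat -> R.

Fixpoint rsum (n : nat) (f : nat -> R) : R :=
  match n with
  | O => 0
  | S m => rsum m f + f m
  end.

Definition teq (n1 n2 n3 : nat) (A B : tensor3) : Prop :=
  forall i j k, (i < n1)%nat -> (j < n2)%nat -> (k < n3)%nat -> A i j k = B i j k.

Definition frob (n1 n2 n3 : nat) (A B : tensor3) : R :=
  rsum n1 (fun i => rsum n2 (fun j => rsum n3 (fun k => A i j k * B i j k))).

Definition tzero : tensor3 := fun _ _ _ => 0.
Definition tadd (A B : tensor3) : tensor3 := fun i j k => A i j k + B i j k.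
Definition tsum (Ys : list tensor3) : tensor3 := fold_right tadd tzero Ys.

Definition rank_one (n1 n2 n3 : nat) (Y : tensor3) : Prop :=
  (exists x y z : nat -> R, teq n1 n2 n3 Y (fun i j k => x i * y j * z k)) /\
  (exists i j k, (i < n1)%nat /\ (j < n2)%nat /\ (k < n3)%nat /\ Y i j k <> 0).

Definition orth_decomp (n1 n2 n3 : nat) (A : tensor3) (r : nat) : Prop :=
  exists Ys : list tensor3,
    length Ys = r /\
    Forall (rank_one n1 n2 n3) Ys /\
    (forall a b, (a < r)%nat -> (b < r)%nat -> a <> b ->
       frob n1 n2 n3 (nth a Ys tzero) (nth b Ys tzero) = 0) /\
    teq n1 n2 n3 A (tsum Ys).

Definition is_orth_rank (n1 n2 n3 : nat) (A : tensor3) (r : nat) : Prop :=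
  orth_decomp n1 n2 n3 A r /\
  (forall r', orth_decomp n1 n2 n3 A r' -> (r <= r')%nat).

(* Main.v *)
Require Import Defs.
From Stdlib Require Import Reals List Arith Lra Lia Psatz Classical.
Open Scope R_scope.

Definition vec := nat -> R.
Definition dot (u v : vec) : R := u 0%nat * v 0%nat + u 1%nat * v 1%nat + u 2%nat * v 2%nat.
Definition out (x y z : vec) : tensor3 := fun i j k => x i * y j * z k.

Definition kd (a b : nat) : R := if Nat.eqb a b then 1 else 0.
Definition eps3 (i j k : nat) : R :=
  match i, j, k with
  | 0,1,2 => 1 | 1,2,0 => 1 | 2,0,1 => 1
  | 0,2,1 => -1 | 2,1,0 => -1 | 1,0,2 => -1
  | _,_,_ => 0 end.
Definition Aex : tensor3 := fun i j k =>
  4 * eps3 i j k + kd i j * kd k 0 + kd i k * kd j 0 + kd j k * kd i 0.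

Lemma frob_Aex : frob 3 3 3 Aex Aex = 111.
Proof. unfold frob, Aex, kd, eps3; simpl; ring. Qed.

Definition wv (x y : vec) : vec := fun k =>
  Aex 0%nat 0%nat k * x 0%nat * y 0%nat + Aex 0%nat 1%nat k * x 0%nat * y 1%nat + Aex 0%nat 2%nat k * x 0%nat * y 2%nat + Aex 1%nat 0%nat k * x 1%nat * y 0%nat + Aex 1%nat 1%nat k * x 1%nat * y 1%nat + Aex 1%nat 2%nat k * x 1%nat * y 2%nat + Aex 2%nat 0%nat k * x 2%nat * y 0%nat + Aex 2%nat 1%nat k * x 2%nat * y 1%nat + Aex 2%nat 2%nat k * x 2%nat * y 2%nat.

Lemma key_id (x y z : vec) :
  18 * (dot x x * dot y y * dot z z) - (frob 3 3 3 Aex (out x y z))^2 =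
  dot z z * ( (3*x 0%nat*y 0%nat + 4*x 1%nat*y 1%nat - x 1%nat*y 2%nat + x 2%nat*y 1%nat + 4*x 2%nat*y 2%nat)^2
             + (x 0%nat*y 1%nat + x 2%nat*y 0%nat)^2 + (x 0%nat*y 2%nat - x 1%nat*y 0%nat)^2
             + (x 1%nat*y 1%nat + x 2%nat*y 2%nat)^2 + (x 1%nat*y 2%nat - x 2%nat*y 1%nat)^2)
  + (wv x y 0%nat * z 1%nat - wv x y 1%nat * z 0%nat)^2
  + (wv x y 0%nat * z 2%nat - wv x y 2%nat * z 0%nat)^2
  + (wv x y 1%nat * z 2%nat - wv x y 2%nat * z 1%nat)^2.
Proof. unfold frob, out, wv, dot, Aex, kd, eps3; simpl; ring. Qed.
Lemma key_ineq (x y z : vec) :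
  (frob 3 3 3 Aex (out x y z))^2 <= 18 * (dot x x * dot y y * dot z z).
Proof.
  assert (H := key_id x y z).
  assert (Hz : 0 <= dot z z) by (unfold dot; nra).
  assert (0 <= dot z z * ( (3*x 0%nat*y 0%nat + 4*x 1%nat*y 1%nat - x 1%nat*y 2%nat + x 2%nat*y 1%nat + 4*x 2%nat*y 2%nat)^2
             + (x 0%nat*y 1%nat + x 2%nat*y 0%nat)^2 + (x 0%nat*y 2%nat - x 1%nat*y 0%nat)^2
             + (x 1%nat*y 1%nat + x 2%nat*y 2%nat)^2 + (x 1%nat*y 2%nat - x 2%nat*y 1%nat)^2)).
  { apply Rmult_le_pos; [exact Hz|]. repeat apply Rplus_le_le_0_compat; apply pow2_ge_0. }
  assert (0 <= (wv x y 0%nat * z 1%nat - wv x y 1%nat * z 0%nat)^2) by apply pow2_ge_0.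
  assert (0 <= (wv x y 0%nat * z 2%nat - wv x y 2%nat * z 0%nat)^2) by apply pow2_ge_0.
  assert (0 <= (wv x y 1%nat * z 2%nat - wv x y 2%nat * z 1%nat)^2) by apply pow2_ge_0.
  lra.
Qed.

Lemma frob_out (x y z x' y' z' : vec) :
  frob 3 3 3 (out x y z) (out x' y' z') = dot x x' * dot y y' * dot z z'.
Proof. unfold frob, out, dot; simpl; ring. Qed.

Lemma rsum_ext n f g : (forall i, (i < n)%nat -> f i = g i) -> rsum n f = rsum n g.
Proof.
  induction n; intros H; simpl; auto.
  rewrite IHn; [rewrite H; auto|]. intros; apply H; lia.
Qed.

Lemma rsum_nonneg n f : (forall i, (i < n)%nat -> 0 <= f i) -> 0 <= rsum n f.
Proof.
  induction n; intros H; simpl; [lra|].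
  assert (0 <= f n) by (apply H; lia). assert (0 <= rsum n f) by (apply IHn; intros; apply H; lia). lra.
Qed.

Lemma rsum_ge n f m : (forall i, (i < n)%nat -> 0 <= f i) -> (m < n)%nat -> f m <= rsum n f.
Proof.
  induction n; intros H Hm; [lia|]. simpl.
  destruct (Nat.eq_dec m n) as [->|Hne].
  - assert (0 <= rsum n f) by (apply rsum_nonneg; intros; apply H; lia). lra.
  - assert (f m <= rsum n f) by (apply IHn; [intros; apply H; lia| lia]).
    assert (0 <= f n) by (apply H; lia). lra.
Qed.

Lemma frob_ext_l A A' B : teq 3 3 3 A A' -> frob 3 3 3 A B = frob 3 3 3 A' B.
Proof.
  intros H. unfold frob. apply rsum_ext; intros i Hi. apply rsum_ext; intros j Hj.
  apply rsum_ext; intros k Hk. rewrite H; auto.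
Qed.

Lemma frob_sym A B : frob 3 3 3 A B = frob 3 3 3 B A.
Proof. unfold frob; simpl; ring. Qed.

Lemma frob_ext_r A B B' : teq 3 3 3 B B' -> frob 3 3 3 A B = frob 3 3 3 A B'.
Proof. intros H. rewrite (frob_sym A B), (frob_sym A B'). apply frob_ext_l; auto. Qed.

Lemma frob_tadd_l A B C : frob 3 3 3 (tadd A B) C = frob 3 3 3 A C + frob 3 3 3 B C.
Proof. unfold frob, tadd; simpl; ring. Qed.

Lemma frob_tzero_l C : frob 3 3 3 tzero C = 0.
Proof. unfold frob, tzero; simpl; ring. Qed.

Lemma frob_self_pos Y i j k : (i < 3)%nat -> (j < 3)%nat -> (k < 3)%nat -> Y i j k <> 0 ->
  0 < frob 3 3 3 Y Y.
Proof.
  intros Hi Hj Hk Hne.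
  assert (Y i j k * Y i j k <= frob 3 3 3 Y Y).
  { unfold frob.
    eapply Rle_trans; [|apply (rsum_ge _ _ i); auto].
    2:{ intros; apply rsum_nonneg; intros; apply rsum_nonneg; intros; nra. }
    eapply Rle_trans; [|apply (rsum_ge _ _ j); auto].
    2:{ intros; apply rsum_nonneg; intros; nra. }
    eapply Rle_trans; [|apply (rsum_ge _ _ k); auto].
    2:{ intros; nra. }
    lra. }
  assert (0 < Y i j k * Y i j k) by (apply Rsqr_pos_lt in Hne; unfold Rsqr in Hne; lra).
  lra.
Qed.

Fixpoint pw (l : list tensor3) : Prop :=
  match l with
  | nil => True
  | Y :: l' => Forall (fun Z => frob 3 3 3 Y Z = 0) l' /\ pw l'
  end.

Lemma nth_pw (l : list tensor3) :
  (forall a b, (a < length l)%nat -> (b < length l)%nat -> a <> b ->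
     frob 3 3 3 (nth a l tzero) (nth b l tzero) = 0) -> pw l.
Proof.
  induction l as [|Y l IH]; intros H; simpl; auto. split.
  - apply Forall_forall. intros Z HZ. destruct (In_nth l Z tzero HZ) as [b [Hb <-]].
    apply (H 0%nat (S b)); simpl; lia.
  - apply IH. intros a b Ha Hb Hab. apply (H (S a) (S b)); simpl; lia.
Qed.

Definition sumsq (l : list tensor3) : R := fold_right (fun Y acc => frob 3 3 3 Y Y + acc) 0 l.

Lemma frob_tsum_r_zero Y l : Forall (fun Z => frob 3 3 3 Y Z = 0) l -> frob 3 3 3 Y (tsum l) = 0.
Proof.
  induction 1; simpl.
  - rewrite frob_sym, frob_tzero_l; auto.
  - rewrite frob_sym, frob_tadd_l, (frob_sym x), (frob_sym (tsum l)), H, IHForall; ring.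
Qed.

Lemma frob_tsum_self l : pw l -> frob 3 3 3 (tsum l) (tsum l) = sumsq l.
Proof.
  induction l as [|Y l IH]; simpl; intros.
  - apply frob_tzero_l.
  - destruct H as [H1 H2].
    rewrite frob_tadd_l, frob_sym, frob_tadd_l, (frob_sym (tsum l) (tadd Y (tsum l))), frob_tadd_l.
    rewrite (frob_sym (tsum l) Y), frob_tsum_r_zero by auto. rewrite IH by auto. ring.
Qed.

Lemma frob_tsum_mem l Y : pw l -> In Y l -> frob 3 3 3 (tsum l) Y = frob 3 3 3 Y Y.
Proof.
  induction l as [|Z l IH]; simpl; intros Hp Hin; [contradiction|].
  destruct Hp as [H1 H2]. rewrite frob_tadd_l. destruct Hin as [<-|Hin].
  - rewrite (frob_sym (tsum l) Z), frob_tsum_r_zero by auto. ring.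
  - rewrite IH by auto. rewrite Forall_forall in H1. rewrite H1 by auto. ring.
Qed.

Lemma sumsq_bound l : Forall (fun Y => frob 3 3 3 Y Y <= 18) l -> sumsq l <= 18 * INR (length l).
Proof.
  induction 1; simpl length; simpl sumsq. simpl; lra. rewrite S_INR. simpl sumsq in *. lra.
Qed.

Lemma lower_bound r : orth_decomp 3 3 3 Aex r -> (7 <= r)%nat.
Proof.
  intros [Ys [Hlen [Hr1 [Hor Heq]]]].
  assert (Hpw : pw Ys) by (apply nth_pw; rewrite Hlen; auto).
  assert (Hb : Forall (fun Y => frob 3 3 3 Y Y <= 18) Ys).
  { apply Forall_forall. intros Y HY. rewrite Forall_forall in Hr1.
    destruct (Hr1 Y HY) as [[x [y [z Hxyz]]] [i [j [k [Hi [Hj [Hk Hne]]]]]]].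
    assert (Hp := frob_self_pos Y i j k Hi Hj Hk Hne).
    assert (E1 : frob 3 3 3 Aex Y = frob 3 3 3 Y Y).
    { rewrite (frob_ext_l _ _ _ Heq). apply frob_tsum_mem; auto. }
    assert (E2 : frob 3 3 3 Aex Y = frob 3 3 3 Aex (out x y z)) by (apply frob_ext_r; exact Hxyz).
    assert (E3 : frob 3 3 3 Y Y = frob 3 3 3 (out x y z) (out x y z)).
    { rewrite (frob_ext_l _ _ _ Hxyz). apply frob_ext_r; exact Hxyz. }
    assert (K := key_ineq x y z). rewrite frob_out in E3.
    rewrite <- E2, E1, <- E3 in K. nra. }
  assert (HA : frob 3 3 3 Aex Aex = sumsq Ys).
  { rewrite (frob_ext_l _ _ _ Heq), (frob_ext_r _ _ _ Heq). apply frob_tsum_self; auto. }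
  rewrite frob_Aex in HA. assert (Hs := sumsq_bound _ Hb). rewrite Hlen in Hs.
  destruct (le_lt_dec 7 r) as [h|h]; auto.
  assert (INR r <= 6) by (replace 6 with (INR 6) by (simpl; ring); apply le_INR; lia). lra.
Qed.
Definition cross (u v : vec) : vec := fun i =>
  match i with
  | 0 => u 1%nat * v 2%nat - u 2%nat * v 1%nat
  | 1 => u 2%nat * v 0%nat - u 0%nat * v 2%nat
  | _ => u 0%nat * v 1%nat - u 1%nat * v 0%nat end.

Lemma cross_norm u v : dot (cross u v) (cross u v) = dot u u * dot v v - (dot u v)^2.
Proof. unfold dot, cross; simpl; ring. Qed.

Lemma basis3 u v : dot u v = 0 -> dot u u <> 0 -> dot v v <> 0 ->
  forall (f : vec) i, (i < 3)%nat ->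
  f i = u i * dot u f / dot u u + v i * dot v f / dot v v
        + cross u v i * dot (cross u v) f / dot (cross u v) (cross u v).
Proof.
  intros Huv Hu Hv f i Hi.
  rewrite cross_norm, Huv.
  replace (dot u u * dot v v - 0^2) with (dot u u * dot v v) by ring.
  assert (E : u i * dot u f * dot v v + v i * dot v f * dot u u + cross u v i * dot (cross u v) f
     = dot u u * dot v v * f i + dot u v * (u i * dot v f + v i * dot u f - dot u v * f i)).
  { destruct i as [|[|[|i]]]; try lia; unfold dot, cross; simpl; ring. }
  rewrite Huv in E.
  replace (u i * dot u f / dot u u + v i * dot v f / dot v v +
           cross u v i * dot (cross u v) f / (dot u u * dot v v))
    with ((u i * dot u f * dot v v + v i * dot v f * dot u u + cross u v i * dot (cross u v) f)
          / (dot u u * dot v v)) by (field; auto).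
  rewrite E. field; auto.
Qed.
Definition col (M : nat -> nat -> R) (j : nat) : vec := fun i => M i j.
Definition det3 (M : nat -> nat -> R) : R := dot (cross (col M 0) (col M 1)) (col M 2).
Definition e (k : nat) : vec := fun i => if Nat.eqb i k then 1 else 0.

Lemma dot_zero v : dot v v = 0 -> v 0%nat = 0 /\ v 1%nat = 0 /\ v 2%nat = 0.
Proof. unfold dot; intros; repeat split; nra. Qed.

Lemma null_rank1 a b c : dot a a <> 0 -> dot (cross a b) (cross a b) = 0 ->
  dot (cross a c) (cross a c) = 0 ->
  exists p, dot p p <> 0 /\ dot p a = 0 /\ dot p b = 0 /\ dot p c = 0.
Proof.
  intros Ha Hb Hc.
  apply dot_zero in Hb; apply dot_zero in Hc.
  assert (Hcr : forall (w x : vec), w 0%nat = 0 /\ w 1%nat = 0 /\ w 2%nat = 0 ->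
     forall k, dot (cross a (e k)) x = - dot (e k) (cross a x)).
  { intros; unfold dot, cross; simpl; ring. }
  assert (Hsum : dot (cross a (e 0)) (cross a (e 0)) + dot (cross a (e 1)) (cross a (e 1))
     + dot (cross a (e 2)) (cross a (e 2)) = 2 * dot a a) by (unfold dot, cross, e; simpl; ring).
  assert (Hgood : forall k, dot (cross a (e k)) (cross a (e k)) <> 0 ->
     exists p, dot p p <> 0 /\ dot p a = 0 /\ dot p b = 0 /\ dot p c = 0).
  { intros k Hk. exists (cross a (e k)). split; auto. split; [unfold dot, cross; simpl; ring|].
    destruct Hb as [b0 [b1 b2]]; destruct Hc as [c0 [c1 c2]].
    split.
    - transitivity (- dot (e k) (cross a b)); [unfold dot, cross; simpl; ring|].
      unfold dot; rewrite b0, b1, b2; ring.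
    - transitivity (- dot (e k) (cross a c)); [unfold dot, cross; simpl; ring|].
      unfold dot; rewrite c0, c1, c2; ring. }
  destruct (Req_dec (dot (cross a (e 0)) (cross a (e 0))) 0) as [h0|h0]; [|eauto].
  destruct (Req_dec (dot (cross a (e 1)) (cross a (e 1))) 0) as [h1|h1]; [|eauto].
  destruct (Req_dec (dot (cross a (e 2)) (cross a (e 2))) 0) as [h2|h2]; [|eauto].
  exfalso. lra.
Qed.

Lemma nullvec M : det3 M = 0 ->
  exists p, dot p p <> 0 /\ forall j, (j < 3)%nat -> dot p (col M j) = 0.
Proof.
  intros Hd. unfold det3 in Hd.
  set (c0 := col M 0) in *. set (c1 := col M 1) in *. set (c2 := col M 2) in *.
  assert (Hj : forall p, dot p c0 = 0 -> dot p c1 = 0 -> dot p c2 = 0 ->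
     forall j, (j < 3)%nat -> dot p (col M j) = 0).
  { intros p h0 h1 h2 j Hj. destruct j as [|[|[|j]]]; try lia; auto. }
  destruct (Req_dec (dot (cross c0 c1) (cross c0 c1)) 0) as [x01|x01].
  2:{ exists (cross c0 c1). split; auto. apply Hj; auto; unfold dot, cross; simpl; ring. }
  destruct (Req_dec (dot (cross c1 c2) (cross c1 c2)) 0) as [x12|x12].
  2:{ exists (cross c1 c2). split; auto. apply Hj; auto; try (unfold dot, cross; simpl; ring).
      rewrite <- Hd; unfold dot, cross; simpl; ring. }
  destruct (Req_dec (dot (cross c2 c0) (cross c2 c0)) 0) as [x20|x20].
  2:{ exists (cross c2 c0). split; auto. apply Hj; auto; try (unfold dot, cross; simpl; ring).
      rewrite <- Hd; unfold dot, cross; simpl; ring. }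
  assert (sw : forall a b, dot (cross a b) (cross a b) = dot (cross b a) (cross b a))
    by (intros; unfold dot, cross; simpl; ring).
  destruct (Req_dec (dot c0 c0) 0) as [z0|z0].
  2:{ destruct (null_rank1 c0 c1 c2) as [p [h1 [h2 [h3 h4]]]]; auto. rewrite sw; auto.
      exists p; split; auto. }
  destruct (Req_dec (dot c1 c1) 0) as [z1|z1].
  2:{ destruct (null_rank1 c1 c2 c0) as [p [h1 [h2 [h3 h4]]]]; auto. rewrite sw; auto.
      exists p; split; auto. }
  destruct (Req_dec (dot c2 c2) 0) as [z2|z2].
  2:{ destruct (null_rank1 c2 c0 c1) as [p [h1 [h2 [h3 h4]]]]; auto. rewrite sw; auto.
      exists p; split; auto. }
  exists (e 0). split; [unfold dot, e; simpl; lra|].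
  apply dot_zero in z0; apply dot_zero in z1; apply dot_zero in z2.
  apply Hj; unfold dot, e; simpl; lra.
Qed.

Lemma complement p : dot p p <> 0 -> exists q, dot q q <> 0 /\ dot p q = 0.
Proof.
  intros Hp.
  set (q1 := fun i => match i with 0 => - p 1%nat | 1 => p 0%nat | _ => 0 end).
  destruct (Req_dec (dot q1 q1) 0) as [h|h].
  2:{ exists q1; split; auto. unfold dot, q1; simpl; ring. }
  exists (fun i => match i with 0 => 0 | 1 => - p 2%nat | _ => p 1%nat end).
  unfold dot, q1 in *; simpl in *. split; [|ring].
  intro h'. apply Hp. nra.
Qed.
Lemma cubic_cont a b c d : continuity (fun s => a*s^3+b*s^2+c*s+d).
Proof. apply derivable_continuous. reg. Qed.

Lemma monic_root a b c d : 0 < a -> exists s, a*s^3 + b*s^2 + c*s + d = 0.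
Proof.
  intros Ha.
  set (B := Rabs b). set (C := Rabs c). set (D := Rabs d).
  assert (hb1 : b <= B) by apply Rle_abs. assert (hb2 : - B <= b) by (unfold B; rewrite <- Rabs_Ropp; pose proof (Rle_abs (-b)); lra).
  assert (hc1 : c <= C) by apply Rle_abs. assert (hc2 : - C <= c) by (unfold C; rewrite <- Rabs_Ropp; pose proof (Rle_abs (-c)); lra).
  assert (hd1 : d <= D) by apply Rle_abs. assert (hd2 : - D <= d) by (unfold D; rewrite <- Rabs_Ropp; pose proof (Rle_abs (-d)); lra).
  assert (hB : 0 <= B) by apply Rabs_pos. assert (hC : 0 <= C) by apply Rabs_pos. assert (hD : 0 <= D) by apply Rabs_pos.
  set (K := 1 + (B + C + D) / a).
  assert (HK : a * K = a + B + C + D) by (unfold K; field; lra).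
  assert (HK1 : 1 <= K).
  { unfold K. assert (0 <= (B + C + D) / a).
    { apply Rmult_le_pos; [|left; apply Rinv_0_lt_compat; auto]. unfold B, C, D.
      pose proof (Rabs_pos b); pose proof (Rabs_pos c); pose proof (Rabs_pos d); lra. }
    lra. }
  set (f := fun s => a*s^3 + b*s^2 + c*s + d).
  assert (HK2 : 1 <= K * K) by nra.
  assert (fK : 0 < f K).
  { unfold f.
    assert (b * K^2 >= - B * K^2) by (assert (0 <= K^2) by nra; nra).
    assert (c * K >= - C * K) by nra. assert (C * K <= C * K^2) by (apply Rmult_le_compat_l; [lra|nra]).
    assert (D <= D * K^2) by (rewrite <- (Rmult_1_r D) at 1; apply Rmult_le_compat_l; [lra|nra]).
    assert (a * K^3 = K^2 * (a + B + C + D)) by (rewrite <- HK; ring).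
    assert (0 < K^2 * a) by nra. nra. }
  assert (fmK : f (-K) < 0).
  { unfold f.
    assert (b * K^2 <= B * K^2) by (assert (0 <= K^2) by nra; nra).
    assert (- c * K <= C * K) by nra. assert (C * K <= C * K^2) by (apply Rmult_le_compat_l; [lra|nra]).
    assert (D <= D * K^2) by (rewrite <- (Rmult_1_r D) at 1; apply Rmult_le_compat_l; [lra|nra]).
    assert (a * K^3 = K^2 * (a + B + C + D)) by (rewrite <- HK; ring).
    assert (0 < K^2 * a) by nra. nra. }
  assert (Hc : continuity f) by (apply cubic_cont).
  destruct (IVT f (-K) K Hc ltac:(lra) fmK fK) as [s [_ Hs]].
  exists s. exact Hs.
Qed.

Lemma cubic_root a b c d : exists s t, (s <> 0 \/ t <> 0) /\
  a*s^3 + b*s^2*t + c*s*t^2 + d*t^3 = 0.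
Proof.
  destruct (Req_dec a 0) as [Ha|Ha].
  - exists 1, 0. split; [left; lra|]. rewrite Ha; ring.
  - destruct (Rlt_dec 0 a) as [Hp|Hn].
    + destruct (monic_root a b c d Hp) as [s Hs]. exists s, 1. split; [right; lra|].
      rewrite <- Hs; ring.
    + destruct (monic_root (-a) (-b) (-c) (-d)) as [s Hs]; [lra|]. exists s, 1. split; [right; lra|].
      replace (a * s ^ 3 + b * s ^ 2 * 1 + c * s * 1 ^ 2 + d * 1 ^ 3)
        with (- (- a * s ^ 3 + - b * s ^ 2 + - c * s + - d)) by ring. rewrite Hs; ring.
Qed.

Definition slice (A : tensor3) (z : vec) : nat -> nat -> R := fun i j =>
  A i j 0%nat * z 0%nat + A i j 1%nat * z 1%nat + A i j 2%nat * z 2%nat.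
Definition lc (s : R) (u : vec) (t : R) (v : vec) : vec := fun i => s * u i + t * v i.

Lemma pencil A u v : exists s t, (s <> 0 \/ t <> 0) /\ det3 (slice A (lc s u t v)) = 0.
Proof.
  set (f := fun s t => det3 (slice A (lc s u t v))).
  set (a := f 1 0). set (d := f 0 1).
  set (S := f 1 1 - a - d). set (Dd := f 1 (-1) - a + d).
  set (b := (S - Dd) / 2). set (c := (S + Dd) / 2).
  assert (Hf : forall s t, f s t = a*s^3 + b*s^2*t + c*s*t^2 + d*t^3).
  { intros s t. unfold b, c, S, Dd, a, d, f, det3, slice, lc, dot, cross, col. simpl. field. }
  destruct (cubic_root a b c d) as [s [t [H1 H2]]].
  exists s, t. split; auto. fold (f s t). rewrite Hf; auto.
Qed.
Definition outer (Y : tensor3) : Prop :=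
  exists x y z : vec, teq 3 3 3 Y (fun i j k => x i * y j * z k).

Lemma frob_out_zero x y z x' y' z' : dot x x' = 0 \/ dot z z' = 0 ->
  frob 3 3 3 (out x y z) (out x' y' z') = 0.
Proof. intros [H|H]; rewrite frob_out, H; ring. Qed.

Lemma dot_div u v a b : dot (fun l => u l / a) (fun l => v l / b) = dot u v * (/a * /b).
Proof. unfold dot, Rdiv; ring. Qed.

Lemma upper_list A : exists Ys, length Ys = 7%nat /\ Forall outer Ys /\ pw Ys /\ teq 3 3 3 A (tsum Ys).
Proof.
  destruct (pencil A (e 0) (e 1)) as [a [b [Hab Hd3]]].
  set (z3 := lc a (e 0) b (e 1)) in *.
  set (v1 := fun i => match i with 0 => -b | 1 => a | _ => 0 end).
  destruct (pencil A v1 (e 2)) as [s [t [Hst Hd2]]].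
  set (z2 := lc s v1 t (e 2)) in *.
  assert (n3 : dot z3 z3 <> 0).
  { unfold z3, dot, lc, e; simpl. destruct Hab; intro; nra. }
  assert (n2 : dot z2 z2 <> 0).
  { replace (dot z2 z2) with (s*s*(a*a+b*b) + t*t) by (unfold z2, dot, lc, e, v1; simpl; ring).
    assert (hab : 0 < a*a+b*b) by (destruct Hab; nra).
    assert (0 <= t*t) by nra. assert (0 <= s*s) by nra.
    destruct Hst as [hs|ht].
    - assert (0 < s*s) by nra. assert (0 < s*s*(a*a+b*b)) by nra. lra.
    - assert (0 < t*t) by nra. assert (0 <= s*s*(a*a+b*b)) by nra. lra. }
  assert (o23 : dot z2 z3 = 0) by (unfold z2, z3, dot, lc, e, v1; simpl; ring).
  set (z1 := cross z2 z3).
  assert (n1 : dot z1 z1 <> 0).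
  { unfold z1; rewrite cross_norm, o23. intro h. apply n2. apply (Rmult_eq_reg_r (dot z3 z3)); auto. lra. }
  destruct (nullvec _ Hd2) as [p2 [np2 Hp2]].
  destruct (complement p2 np2) as [q2 [nq2 opq2]].
  set (r2 := cross p2 q2).
  assert (nr2 : dot r2 r2 <> 0).
  { unfold r2; rewrite cross_norm, opq2. intro h. apply np2. apply (Rmult_eq_reg_r (dot q2 q2)); auto. lra. }
  destruct (nullvec _ Hd3) as [p3 [np3 Hp3]].
  destruct (complement p3 np3) as [q3 [nq3 opq3]].
  set (r3 := cross p3 q3).
  assert (nr3 : dot r3 r3 <> 0).
  { unfold r3; rewrite cross_norm, opq3. intro h. apply np3. apply (Rmult_eq_reg_r (dot q3 q3)); auto. lra. }
  set (w1 := fun l => z1 l / dot z1 z1).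
  set (w2 := fun l => z2 l / dot z2 z2).
  set (w3 := fun l => z3 l / dot z3 z3).
  set (M1 := slice A z1). set (M2 := slice A z2) in *. set (M3 := slice A z3) in *.
  set (y2q := fun j => dot q2 (col M2 j) / dot q2 q2).
  set (y2r := fun j => dot r2 (col M2 j) / dot r2 r2).
  set (y3q := fun j => dot q3 (col M3 j) / dot q3 q3).
  set (y3r := fun j => dot r3 (col M3 j) / dot r3 r3).
  exists (out (e 0) (fun j => M1 0%nat j) w1 :: out (e 1) (fun j => M1 1%nat j) w1 ::
          out (e 2) (fun j => M1 2%nat j) w1 :: out q2 y2q w2 :: out r2 y2r w2 ::
          out q3 y3q w3 :: out r3 y3r w3 :: nil).
  split; [reflexivity|]. split.
  { repeat constructor; eexists; eexists; eexists; intros i j k _ _ _; reflexivity. }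
  split.
  { assert (d12 : dot w1 w2 = 0) by (unfold w1, w2; rewrite dot_div; unfold z1, dot, cross; simpl; ring).
    assert (d13 : dot w1 w3 = 0) by (unfold w1, w3; rewrite dot_div; unfold z1, dot, cross; simpl; ring).
    assert (d23 : dot w2 w3 = 0) by (unfold w2, w3; rewrite dot_div, o23; ring).
    assert (dq2 : dot q2 r2 = 0) by (unfold r2, dot, cross; simpl; ring).
    assert (dq3 : dot q3 r3 = 0) by (unfold r3, dot, cross; simpl; ring).
    simpl pw. repeat split; repeat constructor; apply frob_out_zero;
      first [left; assumption | right; assumption | left; unfold dot, e; simpl; ring]. }
  intros i j l Hi Hj Hl.
  assert (E1 := basis3 z2 z3 o23 n2 n3 (fun m => A i j m) l Hl).
  fold z1 in E1.
  replace (dot z2 (fun m => A i j m)) with (M2 i j) in E1 by (unfold M2, slice, dot; ring).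
  replace (dot z3 (fun m => A i j m)) with (M3 i j) in E1 by (unfold M3, slice, dot; ring).
  replace (dot z1 (fun m => A i j m)) with (M1 i j) in E1 by (unfold M1, slice, dot; ring).
  assert (E2 := basis3 p2 q2 opq2 np2 nq2 (col M2 j) i Hi).
  fold r2 in E2. rewrite (Hp2 j Hj) in E2. unfold col at 1 in E2.
  assert (E3 := basis3 p3 q3 opq3 np3 nq3 (col M3 j) i Hi).
  fold r3 in E3. rewrite (Hp3 j Hj) in E3. unfold col at 1 in E3.
  assert (E4 : M1 i j = e 0 i * M1 0%nat j + e 1 i * M1 1%nat j + e 2 i * M1 2%nat j).
  { destruct i as [|[|[|i]]]; try lia; unfold e; simpl; ring. }
  unfold tsum; cbn [fold_right]; unfold tadd, tzero, out.
  unfold w1, w2, w3, y2q, y2r, y3q, y3r.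
  rewrite E1, E2, E3, E4. field. all: repeat split; auto.
Qed.
Lemma reduce Ys : Forall outer Ys -> pw Ys ->
  exists Zs, (length Zs <= length Ys)%nat /\ incl Zs Ys /\ Forall (rank_one 3 3 3) Zs /\
             pw Zs /\ teq 3 3 3 (tsum Ys) (tsum Zs).
Proof.
  induction Ys as [|Y Ys IH]; intros Ho Hp.
  - exists nil. split; [simpl; lia|]. split; [apply incl_nil_l|]. split; [constructor|]. split; [simpl; auto|]. intros i j k _ _ _; reflexivity.
  - inversion Ho as [|? ? HoY HoYs]; subst. destruct Hp as [Hp1 Hp2].
    destruct (IH HoYs Hp2) as [Zs [Hl [Hi [Hr [Hpz Ht]]]]].
    destruct (classic (exists i j k, (i < 3)%nat /\ (j < 3)%nat /\ (k < 3)%nat /\ Y i j k <> 0)) as [Hnz|Hz].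
    + exists (Y :: Zs). split; [simpl; lia|]. split; [apply incl_cons; [left; auto| apply incl_tl; auto]|].
      split; [constructor; auto; split; auto|]. split.
      * simpl. split; auto. rewrite Forall_forall in *. intros Z HZ. apply Hp1. apply Hi; auto.
      * intros i j k hi hj hk. simpl. unfold tadd. rewrite Ht; auto.
    + exists Zs. split; [simpl; lia|]. split; [apply incl_tl; auto|]. split; auto. split; auto.
      intros i j k hi hj hk. simpl. unfold tadd. rewrite <- Ht; auto.
      assert (Y i j k = 0).
      { destruct (Req_dec (Y i j k) 0); auto. exfalso; apply Hz; exists i, j, k; auto. }
      lra.
Qed.

Lemma pw_nth l : pw l -> forall a b, (a < length l)%nat -> (b < length l)%nat -> a <> b ->
  frob 3 3 3 (nth a l tzero) (nth b l tzero) = 0.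
Proof.
  induction l as [|Y l IH]; simpl; intros Hp a b Ha Hb Hab; [lia|].
  destruct Hp as [H1 H2]. rewrite Forall_forall in H1.
  destruct a as [|a]; destruct b as [|b]; try lia.
  - apply H1. apply nth_In. lia.
  - rewrite frob_sym. apply H1. apply nth_In. lia.
  - apply IH; auto; lia.
Qed.

Lemma upper A : exists r, orth_decomp 3 3 3 A r /\ (r <= 7)%nat.
Proof.
  destruct (upper_list A) as [Ys [Hl [Ho [Hp Ht]]]].
  destruct (reduce Ys Ho Hp) as [Zs [Hlz [_ [Hr [Hpz Htz]]]]].
  exists (length Zs). split; [|lia].
  exists Zs. split; auto. split; auto. split.
  - apply pw_nth; auto.
  - intros i j k hi hj hk. rewrite Ht, Htz; auto.
Qed.

Lemma min_exists (P : nat -> Prop) n : P n -> exists m, P m /\ forall k, P k -> (m <= k)%nat.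
Proof.
  induction n as [n IH] using (well_founded_induction lt_wf). intros Pn.
  destruct (classic (exists k, (k < n)%nat /\ P k)) as [[k [hk Pk]]|hno].
  - apply (IH k hk Pk).
  - exists n. split; auto. intros k Pk. destruct (le_lt_dec n k); auto.
    exfalso; apply hno; eauto.
Qed.

Lemma rank_exists A : exists r, is_orth_rank 3 3 3 A r /\ (r <= 7)%nat.
Proof.
  destruct (upper A) as [r0 [H0 Hr0]].
  destruct (min_exists (orth_decomp 3 3 3 A) r0 H0) as [m [Hm Hmin]].
  exists m. split; [split; auto|]. specialize (Hmin r0 H0). lia.
Qed.

Theorem theorem1p4 :
  (forall A : tensor3, exists r, is_orth_rank 3 3 3 A r /\ (r <= 7)%nat) /\
  (exists A : tensor3, is_orth_rank 3 3 3 A 7).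
Proof.
  split; [exact rank_exists|].
  exists Aex. destruct (rank_exists Aex) as [m [[Hm Hmin] Hle]].
  assert (H7 := lower_bound m Hm).
  assert (m = 7%nat) by lia. subst m. split; auto.
Qed.
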